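(* Let $n\in\mathbb{N}$. For every $\mathbf{p}=(\mathbf{p}_0,\dots,\mathbf{p}_{n-1})\in\mathbb{F}_2^{n}$, the $\mu_n$-measure of the set $\{r\in Q_n: p(r)_k=\mathbf{p}_k \text{ for all } 0\le k<n\}$ equals $2^{-n}$.
   Context: $\mathbb{F}_2((x^{-1}))$ is the field of formal series $r=\sum_{z\in\mathbb{Z}}a_zx^z$, $a_z\in\mathbb{F}_2$, with $a_z\ne0$ for only finitely many positive $z$; $\deg(r)=\max\{z:a_z\ne0\}$. The polynomial part is $[r]=\sum_{z\ge0}a_zx^z$. $S(r)=\frac{r}{x+1}$ if $[r](1)=0$ and $S(r)=\frac{xr}{x+1}$ if $[r](1)=1$; $p(r)_k=[S^k(r)](1)$. $Q_n=\{r:\deg(r)=n\}$ and $\mu_n$ is the probability measure on $Q_n$ under which the coefficients $a_{n-1},a_{n-2},\dots$ are independent and uniform in $\mathbb{F}_2$. *)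

(* Defs.v *)
From HB Require Import structures.
From mathcomp Require Import all_boot all_order all_algebra.
From mathcomp Require Import all_classical all_reals all_analysis.
Set Implicit Arguments. Unset Strict Implicit. Unset Printing Implicit Defensive.
Import Order.TTheory GRing.Theory Num.Theory.
Local Open Scope ring_scope.

(* Elements of F_2((x^{-1})), with F_2 = bool (addition = xor).
   A pair  (D, f)  with D : int and f : nat -> bool represents
        r = x^D * F(x^{-1}),   F(y) = sum_{m>=0} f m * y^m  in F_2[[y]],
   i.e. r = sum_{m>=0} f m * x^(D - m).  Every element of F_2((x^{-1})) has
   such a representation (D an upper bound of its degree). *)
Record lseries := LS { ls_top : int; ls_coef : nat -> bool }.

(* [r](1): the polynomial part evaluated at 1 = xor of the coefficients of
   x^z with z >= 0, i.e. of f m for D - m >= 0. *)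
Definition polypart_at1 (r : lseries) : bool :=
  match ls_top r with
  | Posz d => \big[addb/false]_(m < d.+1) ls_coef r m
  | Negz _ => false
  end.

(* Multiplication by 1/(1+y) in F_2[[y]]: prefix xors. *)
Definition div1y (f : nat -> bool) : nat -> bool :=
  fun m => \big[addb/false]_(i < m.+1) f i.

(* Since x + 1 = x (1 + y) with y = x^{-1}:
     r/(x+1)   = x^(D-1) F(y)/(1+y),
     x r/(x+1) = x^D     F(y)/(1+y). *)
Definition S (r : lseries) : lseries :=
  if polypart_at1 r then LS (ls_top r) (div1y (ls_coef r))
  else LS (ls_top r - 1) (div1y (ls_coef r)).

Definition pseq (r : lseries) (k : nat) : bool := polypart_at1 (iter k S r).

Definition bdigit {R : realType} (m : nat) (t : R) : bool :=
  odd (Num.truncn (t * 2 ^+ m)).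

(* The element of Q_n with a_n = 1 and a_{n-m} = m-th binary digit of t
   (m >= 1).  If t is uniform on [0,1), the digits are i.i.d. uniform bits,
   so mu_n is the push-forward of Lebesgue measure on [0,1) by this map. *)
Definition rQ {R : realType} (n : nat) (t : R) : lseries :=
  LS (Posz n) (fun m => if m == 0%N then true else bdigit m t).

Definition mu {R : realType} (n : nat) (A : lseries -> Prop) : \bar R :=
  (@lebesgue_measure R) [set t : R | (0 <= t < 1) /\ A (rQ n t)].

(* Main.v *)
Require Import Defs.
From HB Require Import structures.
From mathcomp Require Import all_boot all_order all_algebra.
From mathcomp Require Import all_classical all_reals all_analysis.
Import Order.TTheory GRing.Theory Num.Theory.
Local Open Scope ring_scope.

Lemma pseqS r k : pseq r k.+1 = pseq (S r) k.
Proof. by rewrite /pseq iterSr. Qed.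

Lemma div1yS (f : nat -> bool) m : div1y f m.+1 = addb (div1y f m) (f m.+1).
Proof. by rewrite /div1y big_ord_recr. Qed.

Lemma div1y0 (f : nat -> bool) : div1y f 0 = f 0.
Proof. by rewrite /div1y big_ord1. Qed.

Lemma div1y_split (f : nat -> bool) D m : (m <= D)%N ->
  \big[addb/false]_(i < D.+1) f i =
  addb (div1y f m) (\big[addb/false]_(m.+1 <= i < D.+1) f i).
Proof.
move=> mD; rewrite /div1y -!(big_mkord xpredT f).
by rewrite (@big_cat_nat _ _ _ m.+1 0 D.+1).
Qed.

Lemma div1y_inj D (f f' : nat -> bool) : (forall m, (m <= D)%N -> div1y f m = div1y f' m) ->
  forall m, (m <= D)%N -> f m = f' m.
Proof.
move=> H [|m] mD; first by rewrite -(div1y0 f) -(div1y0 f') H.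
have := H m.+1 mD; rewrite !div1yS (H m (ltnW mD)).
by case: (div1y f' m); case: (f m.+1); case: (f' m.+1).
Qed.

Lemma inj_core k : forall (D : nat) (f f' : nat -> bool), (k <= D)%N -> f 0%N = f' 0%N ->
  (forall m, (k < m <= D)%N -> f m = f' m) ->
  (forall i, (i < k)%N -> pseq (LS D f) i = pseq (LS D f') i) ->
  forall m, (m <= D)%N -> f m = f' m.
Proof.
elim: k => [|k IH] D f f' kD f0 Hm Hp.
  by move=> [|m] mD //; apply: Hm.
have Hb := Hp 0%N isT.
rewrite /pseq /= /polypart_at1 /= in Hb.
set b := \big[addb/false]_(m < D.+1) f m in Hb.
have Hg : forall m, (k < m <= D)%N -> div1y f m = div1y f' m.
  move=> m /andP[km mD].
  have e1 := @div1y_split f D m mD; have e2 := @div1y_split f' D m mD.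
  have er : \big[addb/false]_(m.+1 <= i < D.+1) f i =
            \big[addb/false]_(m.+1 <= i < D.+1) f' i.
    apply: eq_big_nat => i /andP[mi iD]; apply: Hm.
    by rewrite (leq_ltn_trans km mi) -ltnS iD.
  move: e1 e2; rewrite -/b Hb er => ->.
  by case: (div1y f m); case: (div1y f' m); case: (\big[addb/false]_(m.+1 <= i < D.+1) f' i).
have gD : div1y f D = div1y f' D.
  have e1 := @div1y_split f D D (leqnn D); have e2 := @div1y_split f' D D (leqnn D).
  by rewrite big_geq // in e1.
apply: (@div1y_inj D) => m mD.
have HS : forall i, (i < k)%N ->
   pseq (S (LS D f)) i = pseq (S (LS D f')) i.
  by move=> i ik; rewrite -!pseqS; apply: Hp.
move: HS; rewrite /S /polypart_at1 /= -/b Hb.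
case: ifP => hb HS.
  apply: (IH D (div1y f) (div1y f') (ltnW kD) _ _ HS m mD).
  - by rewrite (div1y0 f) (div1y0 f').
  - by move=> j /andP[kj jD]; apply: Hg; rewrite kj.
have D0 : (0 < D)%N by apply: leq_trans kD.
have eD : (Posz D - 1 = Posz D.-1 :> int) by rewrite predn_int.
rewrite eD in HS.
case: (ltngtP m D) => [mlt|mgt|->] //; last by rewrite ltnNge mD in mgt.
apply: (IH D.-1) => //.
- by rewrite -ltnS prednK.
- by rewrite (div1y0 f) (div1y0 f').
- move=> j /andP[kj jD]; apply: Hg; rewrite kj /=.
  by apply: leq_trans jD (leq_pred _).
- by rewrite -ltnS prednK.
Qed.



Definition agree (r r' : lseries) := ls_top r = ls_top r' /\
  forall m : nat, (Posz m <= ls_top r)%R -> ls_coef r m = ls_coef r' m.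

Lemma agree_pp r r' : agree r r' -> polypart_at1 r = polypart_at1 r'.
Proof.
case: r r' => [D f] [D' f'] [/= <- H]; rewrite /polypart_at1 /=.
case: D H => [d|d] H //; apply: eq_bigr => i _; apply: H.
by rewrite lez_nat -ltnS.
Qed.

Lemma agree_S r r' : agree r r' -> agree (S r) (S r').
Proof.
move=> Ha; have Hp := agree_pp _ _ Ha; case: Ha.
case: r r' Hp => [D f] [D' f'] /= Hp eD H; subst D'; rewrite /S -Hp /=.
have Hd : forall m, (Posz m <= D)%R -> div1y f m = div1y f' m.
  move=> m mD; rewrite /div1y; apply: eq_bigr => i _; apply: H.
  by apply: le_trans mD; rewrite lez_nat -ltnS.
case: (polypart_at1 (LS D f)); split => //= m mD; apply: Hd; apply: le_trans mD _.
by rewrite gerBl.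
Qed.

Lemma agree_pseq r r' k : agree r r' -> pseq r k = pseq r' k.
Proof.
elim: k r r' => [|k IH] r r' Ha; first exact: agree_pp _ _ Ha.
by rewrite !pseqS; apply: IH; apply: agree_S _ _ Ha.
Qed.


Lemma trunc_shift (R : realType) (t : R) (m n : nat) : 0 <= t -> (m <= n)%N ->
  Num.truncn (t * 2 ^+ m) = (Num.truncn (t * 2 ^+ n) %/ 2 ^ (n - m))%N.
Proof.
move=> t0 mn.
set M := Num.truncn (t * 2 ^+ n); set d := (2 ^ (n - m))%N.
have d0 : (0 < d)%N by rewrite expn_gt0.
have ed : t * 2 ^+ n = t * 2 ^+ m * d%:R.
  by rewrite /d natrX -mulrA -exprD subnKC.
have x0 : 0 <= t * 2 ^+ n by rewrite mulr_ge0 // exprn_ge0.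
have /andP[h1 h2] := truncn_itv x0.
have dR : 0 < d%:R :> R by rewrite ltr0n.
apply: truncn_def; apply/andP; split.
  rewrite -(ler_pM2r dR) -ed -natrM; apply: le_trans h1.
  by rewrite ler_nat leq_divM.
rewrite -(ltr_pM2r dR) -ed -natrM; apply: lt_le_trans h2 _.
by rewrite ler_nat; apply: ltn_ceil.
Qed.

Lemma bdigitE (R : realType) (t : R) (m n : nat) : 0 <= t -> (m <= n)%N ->
  bdigit m t = odd (Num.truncn (t * 2 ^+ n) %/ 2 ^ (n - m))%N.
Proof. by move=> t0 mn; rewrite /bdigit (trunc_shift _ _ _ _ t0 mn). Qed.


Lemma bits_inj n : forall N N', (N < 2^n)%N -> (N' < 2^n)%N ->
  (forall i, (i < n)%N -> odd (N %/ 2^i)%N = odd (N' %/ 2^i)%N) -> N = N'.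
Proof.
elim: n => [|n IH] N N' hN hN' H.
  by move: hN hN'; rewrite expn0 !ltnS !leqn0 => /eqP-> /eqP->.
have o := H 0%N isT; rewrite !expn0 !divn1 in o.
have e : N./2 = N'./2.
  apply: IH.
  - by rewrite -divn2 ltn_divLR // -expnSr.
  - by rewrite -divn2 ltn_divLR // -expnSr.
  move=> i ilt; have := H i.+1 ilt.
  by rewrite expnS !divnMA !divn2.
by rewrite -(odd_double_half N) -(odd_double_half N') o e.
Qed.

Definition cN (n N : nat) (m : nat) : bool :=
  if m == 0%N then true else odd (N %/ 2 ^ (n - m))%N.

Theorem lemma2p8 (R : realType) (n : nat) (p : 'I_n -> bool) :
  @mu R n (fun r => forall k : 'I_n, pseq r k = p k) = ((2 ^+ n)^-1 : R)%:E.
Proof.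
pose h := fun N : 'I_(2 ^ n) => [ffun k : 'I_n => pseq (LS n (cN n N)) k].
have hinj : injective h.
  move=> N N' /ffunP e; apply/val_inj/(@bits_inj n); [exact: ltn_ord..|].
  move=> i ilt.
  have := @inj_core n n (cN n N) (cN n N') (leqnn n) erefl _ _ (n - i)%N (leq_subr _ _).
  rewrite /cN subKn ?(ltnW ilt) // -[(n - i)%N == 0%N]negbK -lt0n subn_gt0 ilt.
  apply.
  - by move=> m /andP[a b]; rewrite ltnNge b in a.
  - by move=> j jn; have := e (Ordinal jn); rewrite !ffunE.
have [N0 hN0] : exists N0, h N0 = finfun p.
  have : finfun p \in codom h.
    apply: (inj_card_onto hinj).
    by rewrite card_ffun card_bool !card_ord.
  by move/codomP => [x ->]; exists x.
have key : forall t : R, 0 <= t < 1 ->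
    ((forall k : 'I_n, pseq (rQ n t) k = p k) <-> Num.truncn (t * 2 ^+ n) = N0).
  move=> t /andP[t0 t1].
  set M := Num.truncn (t * 2 ^+ n).
  have hM : (M < 2 ^ n)%N.
    rewrite truncn_lt_nat ?mulr_ge0 ?exprn_ge0 // natrX.
    by rewrite -[X in _ < X]mul1r ltr_pM2r // exprn_gt0.
  have ag : forall k, pseq (rQ n t) k = pseq (LS n (cN n M)) k.
    move=> k; apply: agree_pseq; split => //= m.
    rewrite lez_nat => mn; rewrite /cN; case: eqP => // _.
    exact: bdigitE.
  split.
    move=> H; have : h (Ordinal hM) = h N0.
      rewrite hN0; apply/ffunP => k; rewrite !ffunE -ag; exact: H.
    by move/hinj => <-.
  move=> eM k; move/ffunP: hN0 => /(_ k).
  rewrite !ffunE ag -eM => <-.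
  by [].
have pn : 0 < 2 ^+ n :> R by rewrite exprn_gt0.
set a := (N0%:R / 2 ^+ n : R); set b := (N0.+1%:R / 2 ^+ n : R).
have hN1 : (N0.+1 <= 2 ^ n)%N := ltn_ord N0.
transitivity (@lebesgue_measure R [set` `[a, b[]).
  rewrite /mu; congr (lebesgue_measure _); apply/seteqP; split => t /=.
  - move=> [t01 /(key t t01) eT]; case/andP: t01 => t0 _.
    have := truncn_eq N0 (mulr_ge0 t0 (ltW pn)); rewrite eT eqxx.
    move/esym/andP => [h1 h2].
    by rewrite in_itv /= ler_pdivrMr // ltr_pdivlMr // h1 h2.
  - rewrite in_itv /= => /andP[ha hb].
    have t0 : 0 <= t by apply: le_trans ha; rewrite divr_ge0 // ltW.
    have t1 : t < 1.
      apply: lt_le_trans hb _; rewrite ler_pdivrMr // mul1r -natrX ler_nat //.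
    split; first by rewrite t0 t1.
    apply/(key t); first by rewrite t0 t1.
    apply/eqP; rewrite truncn_eq ?mulr_ge0 ?(ltW pn) //.
    by rewrite -ler_pdivrMr // -ltr_pdivlMr // ha hb.
have ab : a < b by rewrite ltr_pM2r ?invr_gt0 // ltr_nat.
rewrite lebesgue_measure_itv /= lte_fin ab -EFinD; congr EFin.
by rewrite /a /b -mulrBl -natr1 addrAC subrr add0r mul1r.
Qed.
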